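(* Let $n\geq 1$. Among all topological trees with exactly $n$ leaves, the binary caterpillar $F_n$ has the greatest Matula number. Furthermore, $M(F_n)=q_n$, where the sequence $(q_k)_{k\geq1}$ is defined by $q_1=1$ and $q_k=2p_{q_{k-1}}$ for $k>1$.
   Context: Let $p_m$ denote the $m$-th prime number ($p_1=2,p_2=3,p_3=5,\ldots$). All trees are rooted. The branches of a rooted tree $T$ are the components (rooted at the children of the root) that remain after deleting the root of $T$ and its incident edges. The Matula number $M(T)$ of a rooted tree is defined recursively: $M(K_1)=1$ for the one-vertex tree, and if $T$ has branches $T_1,\ldots,T_r$ then $M(T)=p_{M(T_1)}\cdot p_{M(T_2)}\cdots p_{M(T_r)}$. A leaf is a vertex of outdegree $0$ (so the one-vertex tree has one leaf). A topological tree is a rooted tree with no vertex of outdegree $1$. A binary tree is a rooted tree in which every vertex has outdegree exactly $0$ or $2$. The binary caterpillar $F_n$ is the binary tree with $n$ leaves whose internal (non-leaf) vertices all lie on a single path starting at the root; equivalently $F_1=K_1$ and for $n>1$, $F_n$ has the two branches $K_1$ and $F_{n-1}$. *)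

(* Defs.v *)
From mathcomp Require Import all_boot.
Set Implicit Arguments. Unset Strict Implicit. Unset Printing Implicit Defensive.

Lemma exists_prime_above (n : nat) : exists p, (n < p) && prime p.
Proof. by have [p Hp Pp] := prime_above n; exists p; rewrite Hp Pp. Qed.

Definition next_prime (n : nat) : nat := ex_minn (exists_prime_above n).

(* p_m, the m-th prime (1-indexed): p_1 = 2, p_2 = 3, ...  (p_0 = 1, unused) *)
Definition nth_prime (m : nat) : nat := iter m next_prime 1.

(* Rooted (unordered) trees: a node with its list of branches.
   The order of branches is irrelevant for every notion below. *)
Inductive tree : Type := Node of seq tree.

Definition K1 : tree := Node [::].

Fixpoint matula (t : tree) : nat :=
  let: Node ts := t in foldr (fun b acc => nth_prime (matula b) * acc) 1 ts.

Fixpoint leaves (t : tree) : nat :=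
  let: Node ts := t in
  if ts is [::] then 1 else foldr (fun b acc => leaves b + acc) 0 ts.

Fixpoint topological (t : tree) : bool :=
  let: Node ts := t in (size ts != 1) && foldr (fun b acc => topological b && acc) true ts.

Fixpoint binary (t : tree) : bool :=
  let: Node ts := t in
  ((size ts == 0) || (size ts == 2)) && foldr (fun b acc => binary b && acc) true ts.

(* binary caterpillar F_n: F_1 = K1, F_n has branches K1 and F_(n-1).
   (F_0 := K1 is a dummy value.) *)
Fixpoint caterpillar (n : nat) : tree :=
  match n with
  | 0 => K1
  | m.+1 => if m is 0 then K1 else Node [:: K1; caterpillar m]
  end.

(* q_1 = 1, q_k = 2 p_(q_(k-1)) for k > 1.  (q_0 := 1 is a dummy value.) *)
Fixpoint qseq (k : nat) : nat :=
  match k with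
  | 0 => 1
  | m.+1 => if m is 0 then 1 else 2 * nth_prime (qseq m)
  end.

(* Main.v *)
Require Import Defs.
From mathcomp Require Import all_boot.
From mathcomp Require Import zify.
From mathcomp Require Import ssralg ring.
From Stdlib Require Import BinNums.
From Stdlib Require NArith PeanoNat List.
Set Implicit Arguments. Unset Strict Implicit. Unset Printing Implicit Defensive.

Definition pi (y : nat) : nat := count prime (iota 0 y.+1).

Lemma piS n : pi n.+1 = pi n + prime n.+1.
Proof. by rewrite /pi -(addn1 n.+1) iotaD count_cat /= addn0. Qed.

Lemma pi0 : pi 0 = 0. Proof. by []. Qed.
Lemma pi1 : pi 1 = 0. Proof. by []. Qed.

Lemma pi_mono m n : m <= n -> pi m <= pi n.
Proof.
move/subnK=> <-; elim: (n - m) => [|k IH]; first by rewrite add0n.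
by rewrite addSn piS (leq_trans IH) // leq_addr.
Qed.

Lemma pi_le n : pi n <= n.
Proof.
elim: n => [//|n IH]; rewrite piS.
case: n IH => [|n] IH; first by rewrite pi0.
by case: (prime n.+2); lia.
Qed.

Lemma next_primeP n :
  [/\ n < next_prime n, prime (next_prime n) &
      forall k, n < k -> k < next_prime n -> ~~ prime k].
Proof.
rewrite /next_prime; case: ex_minnP => m /andP[Hm Pm] Hmin; split=> // k Hk Hkm.
apply/negP=> Pk; have := Hmin k; rewrite Hk Pk => /(_ isT); lia.
Qed.

Lemma nth_primeS k : nth_prime k.+1 = next_prime (nth_prime k).
Proof. by rewrite /nth_prime iterS. Qed.

Lemma nth_prime0 : nth_prime 0 = 1. Proof. by []. Qed.

Lemma prime_nth k : 0 < k -> prime (nth_prime k).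
Proof. by case: k => // k _; rewrite nth_primeS; case: (next_primeP (nth_prime k)). Qed.

Lemma nth_prime_ltS k : nth_prime k < nth_prime k.+1.
Proof. by rewrite nth_primeS; case: (next_primeP (nth_prime k)). Qed.

Lemma nth_prime_mono m n : m <= n -> nth_prime m <= nth_prime n.
Proof.
move/subnK=> <-; elim: (n - m) => [|k IH]; first by rewrite add0n.
by rewrite addSn (leq_trans IH) // ltnW // nth_prime_ltS.
Qed.

Lemma nth_prime_smono m n : m < n -> nth_prime m < nth_prime n.
Proof. by move=> H; apply: (leq_trans (nth_prime_ltS m)); apply: nth_prime_mono. Qed.

Lemma nth_prime_gt k : k < nth_prime k.
Proof.
elim: k => [//|k IH]; apply: (leq_ltn_trans IH); exact: nth_prime_ltS.
Qed.

Lemma pi_nth k : pi (nth_prime k) = k.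
Proof.
elim: k => [//|k IH]; rewrite nth_primeS.
case: (next_primeP (nth_prime k)) => H1 H2 H3.
have Hj : forall j, nth_prime k + j < next_prime (nth_prime k) ->
   pi (nth_prime k + j) = k.
  elim=> [|j IHj]; first by rewrite addn0.
  move=> Hlt; rewrite addnS piS IHj; last by lia.
  have := H3 (nth_prime k + j).+1; rewrite -addnS => /(_ _ Hlt) /negbTE ->; first by rewrite addn0.
  lia.
have -> : next_prime (nth_prime k) = (nth_prime k + (next_prime (nth_prime k) - nth_prime k).-1).+1 by lia.
rewrite piS Hj; last by lia.
by rewrite -[X in prime X]/(_.+1) -addnS prednK ?subnKC ?H2 ?addn1 //; try lia.
Qed.

Lemma pi_prime_pred p : prime p -> pi p = (pi p.-1).+1.
Proof. by move=> Pp; have p0 := prime_gt0 Pp; rewrite -(prednK p0) piS prednK // Pp addn1. Qed.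

Lemma pi_lt_nth k y : 0 < k -> y < nth_prime k -> pi y < k.
Proof.
move=> k0 Hy.
have := pi_prime_pred (prime_nth k0); rewrite pi_nth => Hk.
have : pi y <= pi (nth_prime k).-1 by apply: pi_mono; lia.
lia.
Qed.

Lemma nth_le_of_pi k y : 0 < k -> k <= pi y -> nth_prime k <= y.
Proof. move=> k0 H; rewrite leqNgt; apply/negP=> /(pi_lt_nth k0); lia. Qed.

Lemma nth_prime_odd k : 1 < k -> odd (nth_prime k).
Proof.
move=> k1; have Pk := prime_nth (ltnW k1).
have : 2 < nth_prime k.
  have := nth_prime_smono k1; have -> : nth_prime 1 = 2.
    rewrite /nth_prime /= /next_prime; case: ex_minnP => m /andP[Hm Pm] Hmin.
    by apply/eqP; rewrite eqn_leq Hmin // andbT; case: m Hm Pm {Hmin} => [|[|]].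
  by [].
move=> H2; case/primeP: Pk => _ Hd; case Hev: (odd (nth_prime k)) => //.
have : 2 %| nth_prime k by rewrite dvdn2 Hev.
by move/Hd => /orP[] /eqP; lia.
Qed.

Lemma nth_prime_1 : nth_prime 1 = 2.
Proof.
rewrite /nth_prime /= /next_prime; case: ex_minnP => m /andP[Hm Pm] Hmin.
by apply/eqP; rewrite eqn_leq Hmin // andbT; case: m Hm Pm {Hmin} => [|[|]].
Qed.

Lemma next_prime_eq n p : n < p -> prime p ->
  (forall k, n < k -> k < p -> ~~ prime k) -> next_prime n = p.
Proof.
move=> H1 H2 H3; case: (next_primeP n) => G1 G2 G3.
case: (ltngtP (next_prime n) p) => // H.
  by move: (H3 _ G1 H); rewrite G2.
by move: (G3 _ H1 H); rewrite H2.
Qed.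



Lemma nth_prime_ge2 k : 0 < k -> 2 * k <= (nth_prime k).+1.
Proof.
elim: k => [//|k IH] _.
case: k IH => [|k] IH; first by rewrite nth_prime_1.
have := IH isT; have Hlt := nth_prime_ltS k.+1.
case: k IH Hlt => [|k] IH Hlt.
  rewrite nth_prime_1 => _; rewrite [nth_prime 2]nth_primeS nth_prime_1 in Hlt *.
  by case: (next_prime 2) Hlt => [|[|[|]]].
have O1 := nth_prime_odd (isT : 1 < k.+3).
have O0 := nth_prime_odd (isT : 1 < k.+2).
have : nth_prime k.+2 != (nth_prime k.+3).-1.
  apply/negP => /eqP E; move: O1 O0; rewrite E.
  by case: (nth_prime k.+3) Hlt => // m _ /= /negP.
lia.
Qed.

Lemma fact_gt0' n : 0 < n`!. Proof. exact: fact_gt0. Qed.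

Lemma bin_step_odd m :
  'C((m.+1).*2.+1, m.+1) * (m.+1 * m.+2) = 'C(m.*2.+1, m) * ((m.*2).+2 * (m.*2).+3).
Proof.
have A := mul_bin_diag ((m.*2).+3) m.
have B := mul_bin_down ((m.*2).+2) m.
have E1 : (m.+1).*2.+1 = (m.*2).+3 by lia.
have E2 : (m.*2).+2 - m = m.+2 by lia.
rewrite E2 /= in B; rewrite /= in A; rewrite E1.
have -> : 'C((m.*2).+3, m.+1) * (m.+1 * m.+2) = m.+2 * (m.+1 * 'C((m.*2).+3, m.+1)) by ring.
rewrite -A.
have -> : m.+2 * ((m.*2).+3 * 'C((m.*2).+2, m)) = (m.*2).+3 * (m.+2 * 'C((m.*2).+2, m)) by ring.
rewrite -B; ring.
Qed.

Lemma bin_odd_le m : 'C(m.*2.+1, m) <= 4 ^ m.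
Proof.
elim: m => [//|m IH].
have H := bin_step_odd m.
have Hpos : 0 < m.+1 * m.+2 by [].
rewrite -(leq_pmul2r Hpos) H expnS.
apply: (@leq_trans (4 ^ m * ((m.*2).+2 * (m.*2).+3))); first by rewrite leq_mul2r IH orbT.
have : (m.*2).+2 * (m.*2).+3 <= 4 * (m.+1 * m.+2) by nia.
by move=> Hle; rewrite [4 * _ ^ _]mulnC -mulnA leq_mul2l Hle orbT.
Qed.

Lemma prime_ndvd_fact p k : prime p -> k < p -> ~~ (p %| k`!).
Proof.
move=> Pp; elim: k => [_|k IH Hk]; first by rewrite dvdn1; case: eqP Pp => // ->.
rewrite factS Euclid_dvdM // negb_or IH ?andbT; last by lia.
by apply/negP=> /(dvdn_leq (ltn0Sn _)); lia.
Qed.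

Lemma prime_dvd_binodd m p : prime p -> m.+1 < p -> p <= m.*2.+1 -> p %| 'C(m.*2.+1, m).
Proof.
move=> Pp H1 H2.
have E2 : m.*2.+1 - m = m.+1 by lia.
have Hf : 'C(m.*2.+1, m) * (m`! * m.+1`!) = (m.*2.+1)`!.
  by rewrite -E2 bin_fact //; lia.
have : p %| 'C(m.*2.+1, m) * (m`! * m.+1`!).
  by rewrite Hf; apply: dvdn_fact; rewrite prime_gt0.
rewrite Euclid_dvdM // => /orP[//|].
rewrite Euclid_dvdM // => /orP[] Hd.
  by move: (@prime_ndvd_fact p m Pp); rewrite Hd; lia.
by move: (@prime_ndvd_fact p m.+1 Pp); rewrite Hd; lia.
Qed.

Lemma prod_primes_gt0 a b : 0 < \prod_(a <= p < b | prime p) p.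
Proof. by rewrite big_seq_cond; apply: prodn_cond_gt0 => i /andP[_ Pi]; exact: prime_gt0. Qed.

Lemma rng_dvd m k : k <= m.*2.+1 -> \prod_(m.+2 <= p < k.+1 | prime p) p %| 'C(m.*2.+1, m).
Proof.
elim: k => [|k IH] Hk; first by rewrite big_geq.
case: (ltnP k.+1 m.+2) => Hlt; first by rewrite big_geq.
rewrite big_mkcond big_nat_recr //= -big_mkcond.
case Pk: (prime k.+1); last by rewrite muln1 IH //; lia.
rewrite Gauss_dvd ?IH ?prime_dvd_binodd //; try lia.
rewrite coprime_sym big_seq_cond; apply: (big_ind (fun x => coprime k.+1 x)); first by rewrite coprimen1.
- by move=> x y; rewrite coprimeMr => -> ->.
- move=> i /andP[Hi Pi]; rewrite prime_coprime //; apply/negP => Hd.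
  case/primeP: Pi => _ /(_ _ Hd) /orP[] /eqP; move: Hi; rewrite mem_index_iota; lia.
Qed.

Definition prim n := \prod_(0 <= p < n.+1 | prime p) p.

Lemma prim_le n : prim n <= 4 ^ n.
Proof.
elim/ltn_ind: n => n IH.
case: n IH => [|[|[|n]]] IH; try by rewrite /prim unlock /=.
case Ho: (odd n).
-
  have Np : ~~ prime n.+3.
    apply/negP=> /primeP[_ Hd]; have : 2 %| n.+3 by rewrite dvdn2 /= Ho.
    by move/Hd=> /orP[] /eqP; lia.
  rewrite /prim big_mkcond big_nat_recr //= -big_mkcond (negbTE Np) muln1.
  apply: (leq_trans (IH n.+2 (ltnSn _))); rewrite leq_exp2l //.
-
  have [m Hm] : exists m, n.+3 = m.*2.+1.
    exists (n.+2)./2; have := odd_double_half n.+2; rewrite /= Ho /= => <-; lia.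
  have m1 : 0 < m by lia.
  rewrite /prim Hm (@big_cat_nat _ _ _ m.+2) //=; try lia.
  apply: (@leq_trans (4 ^ m.+1 * 'C(m.*2.+1, m))).
    apply: leq_mul; first by apply: (IH m.+1); lia.
    by apply: dvdn_leq; [rewrite bin_gt0; lia | apply: rng_dvd].
  rewrite (_ : 4 ^ m.*2.+1 = 4 ^ m.+1 * 4 ^ m); last by rewrite -expnD; congr (_ ^ _); lia.
  by rewrite leq_mul2l bin_odd_le orbT.
Qed.

Lemma prod_lower t y : (2 ^ t) ^ (pi y - pi (2 ^ t)) <= \prod_((2^t).+1 <= p < y.+1 | prime p) p.
Proof.
elim: y => [|y IH].
  by rewrite (_ : pi 0 - _ = 0) ?expn0 ?prod_primes_gt0 //; rewrite pi0.
case: (ltnP y.+1 (2 ^ t).+1) => Hy.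
  by rewrite (_ : pi y.+1 - _ = 0) ?expn0 ?prod_primes_gt0 //; apply/eqP; rewrite subn_eq0 pi_mono.
rewrite big_mkcond big_nat_recr //= -big_mkcond piS.
case Py: (prime y.+1); last by rewrite addn0 muln1.
have Hm : pi (2 ^ t) <= pi y by apply: pi_mono.
rewrite addn1 subSn // expnS mulnC leq_mul //.
by rewrite ltnW.
Qed.

Lemma prim_split t y : \prod_((2^t).+1 <= p < y.+1 | prime p) p <= prim y.
Proof.
case: (ltnP y (2 ^ t)) => Hy; first by rewrite big_geq ?/prim ?prod_primes_gt0 //; lia.
rewrite /prim [X in _ <= X](@big_cat_nat _ _ _ (2^t).+1) //=.
exact: leq_pmull (prod_primes_gt0 _ _).
Qed.

Lemma LB t x : t * (x - 2 ^ t) <= 2 * nth_prime x.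
Proof.
have H1 := prod_lower t (nth_prime x).
have H2 := prim_split t (nth_prime x).
have H3 := prim_le (nth_prime x).
rewrite pi_nth in H1.
have H4 : (2 ^ t) ^ (x - 2 ^ t) <= 2 ^ (2 * nth_prime x).
  rewrite expnM (leq_trans _ (leq_trans H2 H3)) // (leq_trans _ H1) //.
  by rewrite leq_pexp2l ?expn_gt0 // leq_sub2l // pi_le.
clear H1 H2 H3; case: t H4 => [|t] H4; first by rewrite mul0n.
by rewrite -expnM leq_exp2l // in H4.
Qed.

Lemma cbin_step n : 'C((n.+1).*2, n.+1) * (n.+1 * n.+1) = 'C(n.*2, n) * ((n.*2).+2 * (n.*2).+1).
Proof.
have A := mul_bin_diag ((n.*2).+2) n.
have B := mul_bin_down ((n.*2).+1) n.
have E1 : (n.+1).*2 = (n.*2).+2 by lia.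
have E2 : (n.*2).+1 - n = n.+1 by lia.
rewrite E2 /= in B; rewrite /= in A; rewrite E1.
have -> : 'C((n.*2).+2, n.+1) * (n.+1 * n.+1) = n.+1 * (n.+1 * 'C((n.*2).+2, n.+1)) by ring.
rewrite -A.
have -> : n.+1 * ((n.*2).+2 * 'C((n.*2).+1, n)) = (n.*2).+2 * (n.+1 * 'C((n.*2).+1, n)) by ring.
rewrite -B; ring.
Qed.

Lemma cbin_lower n : 4 ^ n <= n.*2.+1 * 'C(n.*2, n).
Proof.
elim: n => [|n IH]; first by rewrite bin0.
have H := cbin_step n.
have Hp : 0 < n.+1 * n.+1 by [].
rewrite -(leq_pmul2r Hp) -mulnA H expnS.
have -> : (n.+1).*2.+1 * ('C(n.*2, n) * ((n.*2).+2 * (n.*2).+1))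
   = (n.*2.+1 * 'C(n.*2, n)) * ((n.+1).*2.+1 * (n.*2).+2) by ring.
rewrite [4 * _ ^ _]mulnC -mulnA.
apply: leq_mul => //.
have E : (n.+1).*2.+1 = (n.*2).+3 by lia.
rewrite E; nia.
Qed.

Lemma div2_le a q : 0 < q -> a.*2 %/ q <= (a %/ q).*2 + (q <= a.*2).
Proof.
move=> q0; case: (leqP q a.*2) => Hq.
  rewrite addn1 -ltnS ltn_divLR //.
  have := ltn_ceil a q0; rewrite mulSn; lia.
by rewrite divn_small.
Qed.

Lemma sum_ind_le M T : \sum_(1 <= k < M) (k <= T) <= T.
Proof.
suff : \sum_(1 <= k < M) (k <= T) <= minn M.-1 T by move=> H; apply: leq_trans H (geq_minr _ _).
elim: M => [|M IH]; first by rewrite big_geq.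
case: M IH => [|M] IH; first by rewrite big_geq.
rewrite big_nat_recr //=; case: (leqP M.+1 T) => H; lia.
Qed.

Lemma logn_cbin p n : prime p -> logn p 'C(n.*2, n) <= trunc_log p n.*2.
Proof.
move=> Pp; have p1 := prime_gt1 Pp; have p0 := prime_gt0 Pp.
have Hf : 'C(n.*2, n) * (n`! * n`!) = (n.*2)`!.
  have E : n.*2 - n = n by lia.
  have := @bin_fact n.*2 n ltac:(lia); rewrite E; exact.
have H1 : logn p (n.*2)`! = logn p 'C(n.*2, n) + (logn p n`!).*2.
  by rewrite -Hf lognM ?muln_gt0 ?fact_gt0 ?bin_gt0 ?lognM ?fact_gt0 ?addnn //; lia.
have H2 : logn p n`! = \sum_(1 <= k < (n.*2).+1) n %/ p ^ k.
  rewrite logn_fact //.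
  case: n {Hf H1} => [|n]; first by rewrite !big_geq.
  rewrite [RHS](@big_cat_nat _ _ _ n.+2) //=; last by lia.
  rewrite [X in _ = _ + X]big1_seq ?addn0 // => k /andP[_]; rewrite mem_index_iota => /andP[Hk _].
  apply: divn_small; apply: (leq_trans (ltn_expl _ p1)); rewrite leq_exp2l //; lia.
set T := trunc_log p n.*2.
have H3 : \sum_(1 <= k < (n.*2).+1) (n.*2 %/ p ^ k) <=
          \sum_(1 <= k < (n.*2).+1) (2 * (n %/ p^k) + (k <= T)).
  apply: leq_sum => k _; rewrite mul2n.
  have q0 : 0 < p ^ k by rewrite expn_gt0 p0.
  apply: leq_trans (div2_le _ q0) _.
  rewrite leq_add2l; case: (leqP (p ^ k) n.*2) => Hk //.
  by rewrite (trunc_log_max p1 Hk).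
rewrite big_split /= -big_distrr /= -H2 -logn_fact // in H3.
have := sum_ind_le (n.*2).+1 T.
lia.
Qed.

Lemma prod_const_seq (s : seq nat) c : \prod_(i <- s) c = c ^ size s.
Proof. by elim: s => [|x s IH]; rewrite ?big_nil ?big_cons ?IH ?expnS. Qed.

Lemma cbin_upper n : 0 < n -> 'C(n.*2, n) <= (n.*2) ^ (pi n.*2).
Proof.
move=> n0; set C := 'C(n.*2, n).
have C0 : 0 < C by rewrite bin_gt0; lia.
rewrite {1}(prod_prime_decomp C0) prime_decompE big_map /=.
have CF : C %| (n.*2)`!.
  apply/dvdnP; exists (n`! * n`!); rewrite /C.
  have E : n.*2 - n = n by lia.
  by have := @bin_fact n.*2 n ltac:(lia); rewrite E => <-; rewrite mulnC.
have Hmem : forall p, p \in primes C -> prime p /\ p <= n.*2.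
  move=> p; rewrite mem_primes => /and3P[Pp _ Hd]; split => //.
  rewrite leqNgt; apply/negP => Hlt.
  by move: (prime_ndvd_fact Pp Hlt); rewrite (dvdn_trans Hd CF).
apply: (@leq_trans (\prod_(p <- primes C) n.*2)).
  rewrite big_seq [X in _ <= X]big_seq; apply: leq_prod => p /Hmem [Pp Hp].
  apply: (@leq_trans (p ^ trunc_log p n.*2)).
    by rewrite leq_exp2l ?prime_gt1 // logn_cbin.
  by apply: trunc_logP; [exact: prime_gt1 | lia].
rewrite prod_const_seq leq_pexp2l //; first by lia.
rewrite /pi -size_filter; apply: uniq_leq_size; first exact: primes_uniq.
move=> p /Hmem [Pp Hp]; rewrite mem_filter Pp mem_iota; lia.
Qed.

Lemma UB s N : 0 < N -> s * N.+1 + 2 <= 2 ^ s -> nth_prime N <= s * N.+1 + 1.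
Proof.
move=> N0 Hs; set M := s * N.+1.
have s0 : 0 < s by case: s Hs {M} => //; rewrite mul0n.
have M0 : s <= M by rewrite /M leq_pmulr.
set n := (M.+1)./2.
have Hn1 : M <= n.*2 <= M.+1.
  have := odd_double_half M.+1; rewrite -/n; case: (odd M.+1) => /=; lia.
have n0 : 0 < n by lia.
have H1 := cbin_lower n; have H2 := cbin_upper n0.
have H4 : (n.*2) ^ (pi n.*2) <= (2 ^ s) ^ (pi n.*2).
  case: (pi n.*2) => [|k]; first by rewrite !expn0.
  rewrite leq_exp2r //; lia.
have H3 : 2 ^ n.*2 <= 2 ^ (s * (pi n.*2).+1).
  have E4 : 2 ^ n.*2 = 4 ^ n by rewrite -mul2n expnM.
  rewrite E4 mulnS expnD expnM.
  apply: (leq_trans H1); apply: leq_mul; first by lia.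
  exact: leq_trans H2 H4.
rewrite leq_exp2l // in H3.
have HN : N <= pi n.*2.
  have : s * N.+1 <= s * (pi n.*2).+1 by lia.
  by rewrite leq_pmul2l.
apply: (leq_trans (nth_le_of_pi N0 HN)); lia.
Qed.

Fixpoint nxt (n fuel : nat) : nat :=
  match fuel with 0 => 0 | f.+1 => if prime n.+1 then n.+1 else nxt n.+1 f end.

Lemma nxtP n f : nxt n f != 0 -> next_prime n = nxt n f.
Proof.
elim: f n => [//|f IH] n /=.
case Pn: (prime n.+1) => H.
  by apply: next_prime_eq => // k H1 H2; lia.
have := IH n.+1 H => E.
case: (next_primeP n) => G1 G2 G3.
case: (next_primeP n.+1) => G1' G2' G3'.
rewrite -E; apply: next_prime_eq; [lia | exact: G2' | move=> k H1 H2].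
case: (k =P n.+1) => [->|/eqP Hk]; first by rewrite Pn.
by apply: G3'; lia.
Qed.

Definition gnx n := nxt n 200.

Lemma nth_prime_comp k : all (fun i => gnx (iter i gnx 1) != 0) (iota 0 k) ->
  nth_prime k = iter k gnx 1.
Proof.
elim: k => [//|k IH]; rewrite -[X in iota 0 X]addn1 iotaD all_cat /= andbT => /andP[H1 H2].
by rewrite add0n in H2; rewrite IH // (nxtP H2).
Qed.

Lemma np4 : nth_prime 4 = 7. Proof. by rewrite nth_prime_comp; vm_compute. Qed.
Lemma np14 : nth_prime 14 = 43. Proof. by rewrite nth_prime_comp; vm_compute. Qed.
Lemma np86 : nth_prime 86 = 443. Proof. by rewrite nth_prime_comp; vm_compute. Qed.

Lemma expn_pow m n : m ^ n = Nat.pow m n.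
Proof. by elim: n => [//|n IH]; rewrite expnS IH. Qed.

Definition lg (n : nat) : nat := Nat.log2 n.

Lemma lgP n : 0 < n -> 2 ^ lg n <= n < 2 ^ (lg n).+1.
Proof.
move=> n0; have [H1 H2] := PeanoNat.Nat.log2_spec n (elimT ltP n0).
by rewrite !expn_pow; apply/andP; split; [apply/leP|apply/ltP].
Qed.

Lemma lg_le_of n k : 0 < n -> 2 ^ k <= n -> k <= lg n.
Proof.
move=> n0 H; have /andP[_ H2] := lgP n0.
have : 2 ^ k < 2 ^ (lg n).+1 by exact: leq_ltn_trans H H2.
by rewrite ltn_exp2l.
Qed.

Lemma lg_lt_of n k : 0 < n -> n < 2 ^ k -> lg n < k.
Proof.
case: n => [//|n] _ H.
have /andP[H1 _] := lgP (ltn0Sn n).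
have : 2 ^ lg n.+1 < 2 ^ k by exact: leq_ltn_trans H1 H.
by rewrite ltn_exp2l.
Qed.

Lemma lg_mono m n : m <= n -> lg m <= lg n.
Proof. move=> H; apply/leP; apply: PeanoNat.Nat.log2_le_mono; exact/leP. Qed.

Lemma lg_pow k : lg (2 ^ k) = k.
Proof. by rewrite /lg expn_pow PeanoNat.Nat.log2_pow2 //; apply/leP. Qed.

Definition Tf X := lg X - lg (lg X) - 1.
Definition Ff X := Tf X * (X - 2 ^ Tf X).
Definition Sf Y := lg Y + lg (lg Y) + 3.

Lemma pow2_ge k : k.+1 <= 2 ^ k.
Proof. elim: k => [//|k IH]; rewrite expnS; lia. Qed.

Lemma pow2_lin k : 7 <= k -> 9 * k + 16 <= 2 ^ k.
Proof.
elim: k => [//|k IH] Hk; case: (ltngtP k 6) => Hk6; try lia.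
  by rewrite expnS; have := IH Hk6; lia.
by rewrite Hk6.
Qed.

Lemma lg_pos n : 2 <= n -> 0 < lg n.
Proof. by move=> H; apply: (@lg_le_of n 1) => //; lia. Qed.

Lemma lg_lt n : 0 < n -> lg n < n.
Proof. move=> n0; have /andP[H _] := lgP n0; have := pow2_ge (lg n); lia. Qed.

Lemma lg_add m k : 0 < m -> lg (m + k) <= lg m + k.
Proof.
move=> m0; rewrite -ltnS; apply: lg_lt_of; first by lia.
have /andP[_ H] := lgP m0.
rewrite (_ : (lg m + k).+1 = (lg m).+1 + k) ?expnD; last by lia.
have := pow2_ge k; have : 1 <= 2 ^ (lg m).+1 by rewrite expn_gt0.
nia.
Qed.

Lemma sub_lg_mono m m' : 0 < m -> m <= m' -> m - lg m <= m' - lg m'.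
Proof.
move=> m0 H; have := lg_add (m' - m) m0; rewrite subnKC //.
have := lg_lt m0; have := lg_lt (leq_trans m0 H); lia.
Qed.

Lemma Sf_valid Y : 4 <= Y -> Sf Y * Y.+1 + 2 <= 2 ^ Sf Y.
Proof.
move=> HY; rewrite /Sf; set l := lg Y; set t := lg l.
have Y0 : 0 < Y by lia.
have l2 : 2 <= l by apply: lg_le_of.
have l0 : 0 < l by lia.
have t1 : 1 <= t by apply: lg_pos.
have /andP[_ HY2] := lgP Y0; have /andP[_ Hl2] := lgP l0.
rewrite -/l in HY2; rewrite -/t in Hl2.
have Ht : t + 3 <= 2 * 2 ^ t.
  case: t t1 {Hl2} => // t _; rewrite expnS; have := pow2_ge t; lia.
rewrite !expnD !expnS in HY2 Hl2 *.
nia.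
Qed.

Lemma Tf_eq X : 2 <= lg X -> Tf X + lg (lg X) + 1 = lg X.
Proof. move=> H; have := lg_lt (ltnW H); rewrite /Tf; lia. Qed.

Lemma FfP X : 2 <= lg X -> Tf X * lg X * X <= (lg X).+1 * Ff X.
Proof.
move=> H; have E := Tf_eq H.
have X0 : 0 < X by rewrite lt0n; apply/eqP => X0; move: H; rewrite X0.
set m := lg X in H E *; set T := Tf X in E *.
have m0 : 0 < m by lia.
have /andP[HX _] := lgP X0; have /andP[_ Hm] := lgP m0.
rewrite -/m in HX Hm.
have HP : m.+1 * 2 ^ T <= X.
  apply: leq_trans HX.
  have -> : 2 ^ m = 2 ^ T * 2 ^ (lg m).+1 by rewrite -expnD; congr (2 ^ _); lia.
  by rewrite mulnC leq_mul2l Hm orbT.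
rewrite /Ff -/T -/m.
set P := 2 ^ T in HP *.
nia.
Qed.

Lemma Ff_le X : Ff X <= lg X * X.
Proof. rewrite /Ff /Tf; apply: leq_mul; lia. Qed.

Lemma Ff_ge X : 2 <= lg X -> (Tf X - 1) * X <= Ff X.
Proof.
move=> H; have := FfP H; have := Tf_eq H.
set m := lg X; set T := Tf X; set F := Ff X => E H1.
have HT : (T - 1) * m.+1 <= T * m by nia.
have : (T - 1) * X * m.+1 <= m.+1 * F.
  apply: leq_trans H1; rewrite mulnAC; apply: leq_mul => //.
by move=> H2; rewrite mulnC leq_pmul2l // in H2.
Qed.

Lemma poly1 m : 115 <= m -> (12 * m + 39) * (5 * m + 4) * (m.+1 * m.+1) <= (8 * m + 7) * (8 * m + 7) * (m * m).
Proof. move=> H; have -> : m = 115 + (m - 115) by lia. set k := m - 115. nia. Qed.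

Lemma pow9 U A : 3 * U <= 5 * A -> 100 <= A -> U ^ 9 <= A ^ 10.
Proof.
move=> H1 H2.
have : (3 * U) ^ 9 <= (5 * A) ^ 9 by rewrite leq_exp2r.
rewrite !expnMn => H.
have H3 : 5 ^ 9 * A ^ 9 <= 3 ^ 9 * A ^ 10.
  rewrite [A ^ 10]expnS mulnA leq_mul2r; apply/orP; right.
  apply: (@leq_trans (3 ^ 9 * 100)); first by lia.
  by rewrite leq_mul2l H2 orbT.
have := leq_trans H H3.
by rewrite leq_pmul2l.
Qed.

Lemma SYM q X1 Xa q' :
  X1 <= q -> 2 ^ 64 <= X1 -> q * X1 <= 4 * Xa -> q ^ 9 <= Xa ^ 5 ->
  q' <= 2 * (Sf q * q.+1 + 1) ->
  q' * Ff X1 <= 4 * Ff (Ff Xa) /\ q' ^ 9 <= (Ff (Ff Xa)) ^ 5.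
Proof.
move=> H1 H64 HN HJ Hq'.
have q0 : 0 < q by apply: leq_trans H1; apply: leq_trans H64; rewrite expn_gt0.
have Hq64 : 2 ^ 64 <= q by apply: leq_trans H1.
set l := lg q.
have l64 : 64 <= l by apply: lg_le_of.
have /andP[Hql _] := lgP q0; rewrite -/l in Hql.
set t := lg l.
have tl : t <= l by apply: ltnW; apply: lg_lt; lia.
have Es : Sf q = l + t + 3 by [].
set U := 2 * (l + t + 3) + 1.
have hqU : q' <= q * U.
  have := pow2_lin (_ : 7 <= l); rewrite Es in Hq'; nia.
have hF1 : Ff X1 <= l * X1.
  apply: leq_trans (Ff_le X1) _; rewrite leq_mul2r lg_mono ?orbT //.
have Xa0 : 0 < Xa.
  rewrite lt0n; apply/eqP => E; move: HJ; rewrite E exp0n // leqn0 expn_eq0; lia.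
set m := lg Xa.
have /andP[_ HXa] := lgP Xa0; rewrite -/m in HXa.
have Hlm : 9 * l < 5 * m.+1.
  have : 2 ^ (l * 9) < 2 ^ (m.+1 * 5).
    rewrite !expnM; apply: (leq_ltn_trans (leq_trans _ HJ)); first by rewrite leq_exp2r.
    by rewrite ltn_exp2r.
  by rewrite ltn_exp2l //; lia.
have m115 : 115 <= m by lia.
have m0 : 0 < m by lia.
set u := lg m.
have tu : t <= u by apply: lg_mono; lia.
have mu : 9 * u + 16 <= m.
  case: (ltnP u 7) => Hu; first by lia.
  have /andP[Hm _] := lgP m0; rewrite -/u in Hm.
  by apply: leq_trans (pow2_lin Hu) Hm.
have m2 : 2 <= lg Xa by rewrite -/m; lia.
have ETa := Tf_eq m2; rewrite -/m -/u in ETa.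
set Ta := Tf Xa in ETa.
set Xb := Ff Xa.
have Hb1 : Ta * m * Xa <= m.+1 * Xb by apply: FfP.
have Hb2 : (Ta - 1) * Xa <= Xb by apply: Ff_ge.
have XaXb : Xa <= Xb by apply: leq_trans Hb2; apply: leq_pmull; lia.
set mb := lg Xb.
have mmb : m <= mb by apply: lg_mono.
have mb2 : 2 <= lg Xb by rewrite -/mb; lia.
have ETb := Tf_eq mb2; rewrite -/mb in ETb.
set Tb := Tf Xb in ETb.
have TaTb : Ta <= Tb.
  have := sub_lg_mono m0 mmb; rewrite -/u; lia.
set Xc := Ff Xb.
have Hc1 : Tb * mb * Xb <= mb.+1 * Xc by apply: FfP.
have Hc2 : (Tb - 1) * Xb <= Xc by apply: Ff_ge.
have EU : U = 2 * (l + t + 3) + 1 by [].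
clearbody U Xc Tb mb Xb Ta u m t l.
split.
-
  have K1 : U * l * (m.+1 * m.+1) <= Ta * Ta * (m * m).
    have P1 := poly1 m115.
    have A1 : 9 * U <= 12 * m + 39 by lia.
    have A2 : 9 * l <= 5 * m + 4 by lia.
    have A3 : 8 * m + 7 <= 9 * Ta by lia.
    have : 81 * (U * l * (m.+1 * m.+1)) <= 81 * (Ta * Ta * (m * m)).
      apply: (@leq_trans ((12 * m + 39) * (5 * m + 4) * (m.+1 * m.+1))).
        have -> : 81 * (U * l * (m.+1 * m.+1)) = (9 * U) * (9 * l) * (m.+1 * m.+1) by ring.
        by apply: leq_mul => //; apply: leq_mul.
      apply: leq_trans P1 _.
      have -> : 81 * (Ta * Ta * (m * m)) = (9 * Ta) * (9 * Ta) * (m * m) by ring.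
      by apply: leq_mul => //; apply: leq_mul.
    by rewrite leq_pmul2l.
  have K2 : U * l * Xa * m.+1 <= Ta * m * Xb.
    have : U * l * Xa * m.+1 * m.+1 <= Ta * m * Xb * m.+1.
      have -> : U * l * Xa * m.+1 * m.+1 = (U * l * (m.+1 * m.+1)) * Xa by ring.
      apply: (leq_trans (leq_mul K1 (leqnn Xa))).
      have -> : Ta * Ta * (m * m) * Xa = (Ta * m) * (Ta * m * Xa) by ring.
      have -> : Ta * m * Xb * m.+1 = (Ta * m) * (m.+1 * Xb) by ring.
      by rewrite leq_mul2l Hb1 orbT.
    by rewrite leq_pmul2r.
  have K3 : Ta * m * Xb <= m.+1 * Xc.
    have : Ta * m * Xb * mb.+1 <= m.+1 * Xc * mb.+1.
      have A : Ta * (m * mb.+1) <= Tb * (mb * m.+1).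
        by apply: leq_mul => //; rewrite !mulnS [mb * m]mulnC leq_add2r.
      have -> : Ta * m * Xb * mb.+1 = (Ta * (m * mb.+1)) * Xb by ring.
      apply: (leq_trans (leq_mul A (leqnn Xb))).
      have -> : Tb * (mb * m.+1) * Xb = (Tb * mb * Xb) * m.+1 by ring.
      have -> : m.+1 * Xc * mb.+1 = (mb.+1 * Xc) * m.+1 by ring.
      by rewrite leq_mul2r Hc1 orbT.
    by rewrite leq_pmul2r.
  have K4 : U * l * Xa <= Xc.
    have := leq_trans K2 K3; rewrite [m.+1 * Xc]mulnC leq_pmul2r //.
  apply: (@leq_trans (q * U * (l * X1))); first exact: leq_mul.
  have -> : q * U * (l * X1) = (U * l) * (q * X1) by ring.
  apply: (@leq_trans ((U * l) * (4 * Xa))); first by rewrite leq_mul2l HN orbT.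
  have -> : U * l * (4 * Xa) = 4 * (U * l * Xa) by ring.
  by rewrite leq_mul2l K4 orbT.
-
  have HXc : (Ta - 1) * (Ta - 1) * Xa <= Xc.
    apply: leq_trans Hc2; apply: (@leq_trans ((Tb - 1) * ((Ta - 1) * Xa))).
      by rewrite -mulnA leq_mul2r leq_sub2r ?orbT.
    by rewrite leq_mul2l Hb2 orbT.
  have K5 : U ^ 9 <= (Ta - 1) ^ 10 by apply: pow9; lia.
  apply: (@leq_trans ((q * U) ^ 9)); first by rewrite leq_exp2r.
  apply: (@leq_trans (Xa ^ 5 * (Ta - 1) ^ 10)).
    by rewrite expnMn; apply: leq_mul.
  apply: (@leq_trans (((Ta - 1) * (Ta - 1) * Xa) ^ 5)); last by rewrite leq_exp2r.
  by rewrite !expnMn -!expnD mulnC.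
Qed.

Definition Ystep Y := 2 * (Sf Y * Y.+1 + 1).
Definition Xq i := iter i Ff 886.
Definition Yq i := iter i Ystep 886.

Local Notation Nadd := NArith.BinNat.N.add.
Local Notation Nsub := NArith.BinNat.N.sub.
Local Notation Nmul := NArith.BinNat.N.mul.
Local Notation Npow := NArith.BinNat.N.pow.
Local Notation Nlog := NArith.BinNat.N.log2.
Local Notation Nleb := NArith.BinNat.N.leb.
Definition FfN (X : N) : N :=
  let m := Nlog X in let T := Nsub (Nsub m (Nlog m)) (Npos xH) in Nmul T (Nsub X (Npow (Npos (xO xH)) T)).
Definition SfN (Y : N) : N := Nadd (Nadd (Nlog Y) (Nlog (Nlog Y))) (Npos (xI xH)).
Definition YstepN (Y : N) : N := Nmul (Npos (xO xH)) (Nadd (Nmul (SfN Y) (Nadd Y (Npos xH))) (Npos xH)).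
Definition XqN i := iter i FfN (NArith.BinNat.N.of_nat 886).
Definition YqN i := iter i YstepN (NArith.BinNat.N.of_nat 886).


Lemma toN_pow a b : NArith.BinNat.N.to_nat (Npow a b) = NArith.BinNat.N.to_nat a ^ NArith.BinNat.N.to_nat b.
Proof. by rewrite NArith.Nnat.N2Nat.inj_pow expn_pow. Qed.

Lemma lg_unique n k : 2 ^ k <= n < 2 ^ k.+1 -> lg n = k.
Proof.
move=> /andP[H1 H2]; have n0 : 0 < n by apply: leq_trans H1; rewrite expn_gt0.
apply/eqP; rewrite eqn_leq lg_le_of // andbT -ltnS lg_lt_of //.
Qed.

Lemma toN_le a b : NArith.BinNat.N.le a b -> NArith.BinNat.N.to_nat a <= NArith.BinNat.N.to_nat b.
Proof.
move=> H; apply/leP; apply/PeanoNat.Nat.compare_le_iff.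
by rewrite -NArith.Nnat.N2Nat.inj_compare.
Qed.
Lemma toN_lt a b : NArith.BinNat.N.lt a b -> NArith.BinNat.N.to_nat a < NArith.BinNat.N.to_nat b.
Proof.
move=> H; apply/ltP; apply/PeanoNat.Nat.compare_lt_iff.
by rewrite -NArith.Nnat.N2Nat.inj_compare.
Qed.

Lemma lgN n : lg (NArith.BinNat.N.to_nat n) = NArith.BinNat.N.to_nat (NArith.BinNat.N.log2 n).
Proof.
case: n => [//|p].
have [H1 H2] := NArith.BinNat.N.log2_spec (Npos p) (erefl _).
apply: lg_unique; apply/andP; split.
  by have := toN_le H1; rewrite toN_pow.
have := toN_lt H2; rewrite toN_pow NArith.Nnat.N2Nat.inj_succ //.
Qed.

Lemma FfN_ok X : NArith.BinNat.N.to_nat (FfN X) = Ff (NArith.BinNat.N.to_nat X).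
Proof.
rewrite /FfN /Ff /Tf NArith.Nnat.N2Nat.inj_mul !NArith.Nnat.N2Nat.inj_sub toN_pow !lgN.
by rewrite !NArith.Nnat.N2Nat.inj_sub.
Qed.

Lemma YstepN_ok Y : NArith.BinNat.N.to_nat (YstepN Y) = Ystep (NArith.BinNat.N.to_nat Y).
Proof.
rewrite /YstepN /Ystep /SfN /Sf.
repeat (rewrite ?NArith.Nnat.N2Nat.inj_mul ?NArith.Nnat.N2Nat.inj_add).
rewrite !lgN /=; lia.
Qed.

Lemma XqN_ok i : NArith.BinNat.N.to_nat (XqN i) = Xq i.
Proof. by elim: i => [//|i IH]; rewrite /XqN /Xq !iterS FfN_ok -/(XqN i) IH. Qed.

Lemma YqN_ok i : NArith.BinNat.N.to_nat (YqN i) = Yq i.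
Proof. by elim: i => [//|i IH]; rewrite /YqN /Yq !iterS YstepN_ok -/(YqN i) IH. Qed.

Lemma qseqSS k : qseq k.+2 = 2 * nth_prime (qseq k.+1). Proof. by []. Qed.
Lemma q2 : qseq 2 = 4. Proof. by rewrite qseqSS (_ : qseq 1 = 1) // nth_prime_1. Qed.
Lemma q3 : qseq 3 = 14. Proof. by rewrite qseqSS q2 np4. Qed.
Lemma q4 : qseq 4 = 86. Proof. by rewrite qseqSS q3 np14. Qed.
Lemma q5 : qseq 5 = 886. Proof. by rewrite qseqSS q4 np86. Qed.

Lemma q_step k : qseq k <= qseq k.+1.
Proof.
case: k => [//|[|k]]; first by rewrite q2.
rewrite [qseq k.+3]qseqSS; have := nth_prime_gt (qseq k.+2); lia.
Qed.

Lemma q_mono m n : m <= n -> qseq m <= qseq n.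
Proof.
move/subnK=> <-; elim: (n - m) => [|k IH]; first by rewrite add0n.
by rewrite addSn (leq_trans IH) // q_step.
Qed.

Lemma q_pos k : 0 < qseq k.
Proof. by case: k => [//|k]; apply: leq_trans (q_mono (leq0n k.+1)). Qed.

Lemma X_le_q i : Xq i <= qseq (5 + i).
Proof.
elim: i => [|i IH]; first by rewrite q5.
rewrite /Xq iterS -/(Xq i) (_ : 5 + i.+1 = (4 + i).+2); last by lia.
rewrite qseqSS (_ : (4 + i).+1 = 5 + i) //.
apply: leq_trans (LB (Tf (Xq i)) _); rewrite /Ff leq_mul2l leq_sub2r ?orbT //.
Qed.

Lemma Yq_ge i : 886 <= Yq i.
Proof.
elim: i => [//|i IH]; rewrite /Yq iterS -/(Yq i) /Ystep.
apply: leq_trans IH _; rewrite /Sf; nia.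
Qed.

Lemma q_le_Y i : qseq (5 + i) <= Yq i.
Proof.
elim: i => [|i IH]; first by rewrite q5.
rewrite /Yq iterS -/(Yq i) (_ : 5 + i.+1 = (4 + i).+2); last by lia.
rewrite qseqSS (_ : (4 + i).+1 = 5 + i) // /Ystep leq_mul2l; apply/orP; right.
apply: leq_trans (nth_prime_mono IH) _.
apply: UB; first by have := Yq_ge i; lia.
by apply: Sf_valid; have := Yq_ge i; lia.
Qed.

Lemma step_upper q : 4 <= q -> 2 * nth_prime q <= 2 * (Sf q * q.+1 + 1).
Proof. by move=> H; rewrite leq_mul2l UB ?Sf_valid ?orbT //; lia. Qed.

Lemma chain a b i : 4 <= b -> b <= a ->
  qseq a.+1 * Xq (b - 4 + i) <= qseq (a.+1 + i) * Xq (b - 4).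
Proof.
move=> Hb Hab; elim: i => [|i IH]; first by rewrite !addn0.
set Q := qseq (a.+1 + i); set X0 := Xq (b - 4); set Xj := Xq (b - 4 + i).
have HX0 : X0 <= qseq a.+1.
  apply: leq_trans (X_le_q _) _; apply: q_mono; lia.
rewrite (_ : b - 4 + i.+1 = (b - 4 + i).+1) ?addnS // /Xq iterS -/(Xq _) -/Xj.
rewrite (_ : (a.+1 + i).+1 = (a + i).+2) // qseqSS (_ : (a + i).+1 = a.+1 + i) // -/Q.
apply: (@leq_trans (Tf Xj * (Q - 2 ^ Tf Xj) * X0)); last by rewrite leq_mul2r LB orbT.
rewrite /Ff mulnCA -mulnA [_ * X0]mulnC leq_mul2l; apply/orP; right.
rewrite !mulnBr [X0 * Q]mulnC; apply: leq_sub => //.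
by rewrite leq_mul2r HX0 orbT.
Qed.

Lemma pow2_3 L : 3 <= L -> L + 3 <= 2 ^ L.
Proof. elim: L => [//|L IH] H; case: (ltngtP L 2) => HL; try lia; last by rewrite HL.
by rewrite expnS; have := IH HL; lia. Qed.

Lemma Ff_grow X : 512 <= X -> X <= Ff X.
Proof.
move=> HX; have m9 : 9 <= lg X by apply: lg_le_of; [lia | exact: HX].
have m2 : 2 <= lg X by lia.
have H4 := Ff_ge m2; have E := Tf_eq m2.
move: H4 E; set m := lg X; set T := Tf X => H4 E.
have m0 : 0 < m by lia.
have /andP[H1 H2] := lgP m0.
have L3 : 3 <= lg m by apply: lg_le_of; [lia | apply: leq_trans m9].

have H3 := pow2_3 L3.
apply: leq_trans H4; apply: leq_pmull; lia.
Qed.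

Lemma Xq_ge i : 886 <= Xq i.
Proof. by elim: i => [//|i IH]; rewrite /Xq iterS -/(Xq i); apply: leq_trans IH (Ff_grow (leq_trans _ IH)). Qed.

Lemma core_from_N a b : 4 <= b -> b <= a ->
  qseq b.+1 * Xq (b - 4) <= 4 * Xq (b.*2 - 5) ->
  qseq a.+1 * qseq b.+1 <= 4 * qseq (a + b).
Proof.
move=> Hb Hab HN.
have H := chain (b.-1) Hb Hab.
rewrite (_ : b - 4 + b.-1 = b.*2 - 5) in H; last by lia.
rewrite (_ : a.+1 + b.-1 = a + b) in H; last by lia.
have X0 : 0 < Xq (b - 4) by have := Xq_ge (b - 4); lia.
have : qseq a.+1 * qseq b.+1 * Xq (b - 4) <= 4 * qseq (a + b) * Xq (b - 4).
  rewrite -mulnA; apply: leq_trans (_ : qseq a.+1 * (4 * Xq (b.*2 - 5)) <= _).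
    by rewrite leq_mul2l HN orbT.
  by rewrite mulnCA -[4 * _ * _]mulnA leq_mul2l H orbT.
by rewrite leq_pmul2r.
Qed.

Local Notation toN := NArith.BinNat.N.of_nat.
Local Notation ofN := NArith.BinNat.N.to_nat.

Definition checkN (b : nat) : bool :=
  Nleb (Nmul (YqN (b - 4)) (XqN (b - 4))) (Nmul (toN 4) (XqN (b.*2 - 5))).
Lemma checks : all checkN (iota 4 15) = true. Proof. vm_compute. reflexivity. Qed.
Lemma checkJ : Nleb (Nmul (toN 9) (Nadd (Nlog (YqN 14)) (toN 1))) (Nmul (toN 5) (Nlog (XqN 31))) = true.
Proof. vm_compute. reflexivity. Qed.
Lemma check64 : Nleb (Npow (toN 2) (toN 64)) (XqN 14) = true.
Proof. vm_compute. reflexivity. Qed.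

Lemma leb_nat a b : Nleb a b = true -> ofN a <= ofN b.
Proof. by move=> H; apply: toN_le; apply/NArith.BinNat.N.leb_le. Qed.

Lemma ofN_mul a b : ofN (Nmul a b) = ofN a * ofN b.
Proof. by rewrite NArith.Nnat.N2Nat.inj_mul. Qed.
Lemma ofN_add a b : ofN (Nadd a b) = ofN a + ofN b.
Proof. by rewrite NArith.Nnat.N2Nat.inj_add. Qed.
Lemma ofN_toN n : ofN (toN n) = n.
Proof. exact: NArith.Nnat.Nat2N.id. Qed.

Lemma Nb_small b : 4 <= b -> b <= 18 -> qseq b.+1 * Xq (b - 4) <= 4 * Xq (b.*2 - 5).
Proof.
move=> H1 H2.
have : checkN b.
  have := checks; move/allP => /(_ b); apply; rewrite mem_iota; lia.
move/leb_nat; rewrite !ofN_mul ofN_toN YqN_ok !XqN_ok => H.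
apply: leq_trans H; rewrite leq_mul2r; apply/orP; right.
by have := q_le_Y (b - 4); rewrite (_ : 5 + (b - 4) = b.+1) //; lia.
Qed.

Lemma checkJ_gen i j :
  Nleb (Nmul (toN 9) (Nadd (Nlog (YqN i)) (toN 1))) (Nmul (toN 5) (Nlog (XqN j))) = true ->
  9 * (lg (Yq i)).+1 <= 5 * lg (Xq j).
Proof.
move/leb_nat; rewrite !ofN_mul !ofN_add !ofN_toN -!lgN YqN_ok XqN_ok.
by rewrite addn1.
Qed.

Lemma check64_gen j : Nleb (Npow (toN 2) (toN 64)) (XqN j) = true -> 2 ^ 64 <= Xq j.
Proof. by move/leb_nat; rewrite toN_pow !ofN_toN XqN_ok. Qed.

Lemma J_gen q Y X : q <= Y -> 9 * (lg Y).+1 <= 5 * lg X -> 0 < Y -> 0 < X -> q ^ 9 <= X ^ 5.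
Proof.
move=> Hq H Y0 X0.
have /andP[_ HY] := lgP Y0; have /andP[HX _] := lgP X0.
apply: (@leq_trans (2 ^ (5 * lg X))); last by rewrite mulnC expnM leq_exp2r.
apply: (@leq_trans (2 ^ (9 * (lg Y).+1))); last by rewrite leq_exp2l.
rewrite mulnC expnM leq_exp2r //; apply: leq_trans Hq _; exact: ltnW.
Qed.

Lemma J18 : qseq 19 ^ 9 <= Xq 31 ^ 5.
Proof.
apply: (J_gen (q_le_Y 14) (checkJ_gen checkJ)).
  exact: leq_trans (Yq_ge 14).
exact: leq_trans (Xq_ge 31).
Qed.

Lemma X64 : 2 ^ 64 <= Xq 14.
Proof. exact: check64_gen check64. Qed.

Lemma St k : [/\ qseq (18 + k).+1 * Xq (18 + k - 4) <= 4 * Xq ((18 + k).*2 - 5),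
   qseq (18 + k).+1 ^ 9 <= Xq ((18 + k).*2 - 5) ^ 5 & 2 ^ 64 <= Xq (18 + k - 4)].
Proof.
elim: k => [|k [HN HJ H64]].
  by rewrite addn0; split; [apply: Nb_small | exact: J18 | exact: X64].
set b := 18 + k in HN HJ H64 *.
have E1 : 18 + k.+1 = b.+1 by rewrite /b addnS.
rewrite E1.
have HX1 : Xq (b - 4) <= qseq b.+1.
  by have := X_le_q (b - 4); rewrite (_ : 5 + (b - 4) = b.+1) //; rewrite /b; lia.
have Hq4 : 4 <= qseq b.+1 by apply: leq_trans (q_mono (_ : 3 <= b.+1)) ; rewrite ?q3 //; rewrite /b; lia.
have Hq' : qseq b.+2 <= 2 * (Sf (qseq b.+1) * (qseq b.+1).+1 + 1).
  by rewrite qseqSS; apply: step_upper.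
have [S1 S2] := SYM HX1 H64 HN HJ Hq'.
have EX1 : Ff (Xq (b - 4)) = Xq (b.+1 - 4).
  by rewrite /Xq -iterS; congr iter; rewrite /b; lia.
have EX2 : Ff (Ff (Xq (b.*2 - 5))) = Xq (b.+1.*2 - 5).
  by rewrite /Xq -!iterS; congr iter; rewrite /b; lia.
rewrite EX1 EX2 in S1 S2; split; [exact: S1 | exact: S2 |].
have H512 : 512 <= Xq (b - 4).
  have L : 2 ^ 9 <= 2 ^ 64 by rewrite leq_exp2l.
  exact: leq_trans L H64.
rewrite -EX1; exact: leq_trans H64 (Ff_grow H512).
Qed.

Lemma Nb_all b : 4 <= b -> qseq b.+1 * Xq (b - 4) <= 4 * Xq (b.*2 - 5).
Proof.
move=> H; case: (leqP b 18) => Hb; first exact: Nb_small.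
have [HN _ _] := St (b - 18); by rewrite subnKC in HN; [exact: HN | lia].
Qed.

Lemma core a b : 1 <= b -> b <= a -> qseq a.+1 * qseq b.+1 <= 4 * qseq (a + b).
Proof.
move=> H1 H2.
case: (leqP 4 b) => H4; first by apply: core_from_N => //; apply: Nb_all.
have Hx : qseq b.+1 <= qseq a.+1 by apply: q_mono.
case: b H1 H2 H4 Hx => [//|[|[|[|b]]]] H1 H2 H4 Hx; try lia.
- by rewrite q2 addn1 mulnC leqnn.
-
  rewrite q3 addn2 qseqSS.
  have Ha : 3 <= a.+1 by lia.
  have Hq := q_mono Ha; rewrite q3 in Hq.
  have H := nth_prime_ge2 (q_pos a.+1).
  lia.
-
  rewrite q4 addn3.
  case: (ltngtP a 3) => Ha; try lia.
  +
    have Ha5 : 5 <= a.+1 by lia.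
    have Hx5 := q_mono Ha5; rewrite q5 in Hx5.
    rewrite [qseq a.+3]qseqSS.
    have L6 := LB 6 (qseq a.+2).
    rewrite [qseq a.+2]qseqSS in L6 *.
    have H := nth_prime_ge2 (q_pos a.+1).
    have E64 : 2 ^ 6 = 64 by [].
    rewrite E64 in L6.
    move: L6 H Hx5; set x := qseq a.+1; set y := nth_prime x.
    move: (nth_prime (2 * y)) => z; clearbody x y; lia.
  +
    rewrite Ha q4.
    rewrite qseqSS q5.
    have H886 : 0 < 886 by [].
    have H := nth_prime_ge2 H886.
    move: H; move: (nth_prime 886) => z; lia.
Qed.

Lemma prodq2 a b : 1 <= a -> 1 <= b -> nth_prime (qseq a) * nth_prime (qseq b) <= qseq (a + b).
Proof.
wlog Hab : a b / b <= a.
  move=> W Ha Hb; case: (leqP b a) => H; first exact: W.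
  by rewrite mulnC addnC; apply: W => //; exact: ltnW.
move=> Ha Hb.
have := core Hb Hab.
case: a Ha Hab => [//|a] _ Hab; case: b Hb Hab => [//|b] _ Hab.
rewrite !qseqSS; lia.
Qed.

Definition mprod (l : seq nat) := foldr (fun x acc => nth_prime (qseq x) * acc) 1 l.

Lemma prodq (l : seq nat) : all (fun x => 0 < x) l -> 2 <= size l -> mprod l <= qseq (sumn l).
Proof.
elim: l => [//|x [//|y rest] IH] /= /andP[Hx Hall] Hs.
case: rest IH Hall Hs => [|z rest] IH Hall Hs.
  by rewrite /mprod /= muln1 addn0; apply: prodq2 => //; case/andP: Hall.
have Hm : 0 < sumn [:: y, z & rest] by case/andP: Hall => Hy _ /=; lia.
have IH' := IH Hall isT.
rewrite /mprod /= -/(mprod [:: y, z & rest]).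
apply: (@leq_trans (nth_prime (qseq x) * nth_prime (qseq (sumn [:: y, z & rest])))).
  rewrite leq_mul2l; apply/orP; right; apply: leq_trans IH' _.
  exact: ltnW (nth_prime_gt _).
exact: prodq2.
Qed.

Lemma tree_ind2 (P : tree -> Prop) :
  (forall ts, List.Forall P ts -> P (Node ts)) -> forall t, P t.
Proof.
move=> H.
refine (fix IH t := match t with Node ts => H ts ((fix G ts := match ts return List.Forall P ts with
   | [::] => List.Forall_nil _ | t :: ts => List.Forall_cons _ (IH t) (G ts) end) ts) end).
Qed.

Lemma leaves_pos t : 0 < leaves t.
Proof.
elim/tree_ind2: t => [[//|t ts] /List.Forall_cons_iff [Ht _]] /=.
lia.
Qed.

Lemma main_bound T : topological T -> matula T <= qseq (leaves T).
Proof.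
elim/tree_ind2: T => ts IH /= /andP[Hs Htop].
case: ts IH Hs Htop => [//|t ts] IH Hs Htop.
have Hsz : 2 <= size (t :: ts) by case: ts {IH Htop} Hs.
set l := map leaves (t :: ts).
have Hsum : foldr (fun b acc => leaves b + acc) 0 (t :: ts) = sumn l.
  by rewrite /l; elim: (t :: ts) => [//|u us E] /=; rewrite E.
have Hmat : foldr (fun b acc => nth_prime (matula b) * acc) 1 (t :: ts) <= mprod l.
  rewrite /l; move: IH Htop; elim: (t :: ts) => [//|u us E] /List.Forall_cons_iff [Hu Hus] /= /andP[Tu Tus].
  apply: leq_mul; last exact: E.
  by apply: nth_prime_mono; apply: Hu.
rewrite Hsum; apply: leq_trans Hmat _; apply: prodq; last by rewrite /l size_map.
by rewrite /l; elim: (t :: ts) => //= u us ->; rewrite leaves_pos.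
Qed.

Lemma cat_props n : 1 <= n ->
  [/\ binary (caterpillar n), topological (caterpillar n),
      leaves (caterpillar n) = n & matula (caterpillar n) = qseq n].
Proof.
elim: n => [//|[|n] IH] _; first by split.
have [B T L M] := IH isT.
have -> : caterpillar n.+2 = Node [:: K1; caterpillar n.+1] by [].
split.
- by rewrite /= B.
- by rewrite /= T.
- by rewrite /= L addn0.
- have -> : matula (Node [:: K1; caterpillar n.+1]) =
     nth_prime 1 * (nth_prime (matula (caterpillar n.+1)) * 1) by [].
  by rewrite M nth_prime_1 muln1 qseqSS.
Qed.


Theorem mainTheorem3 (n : nat) : 1 <= n ->
  [/\ binary (caterpillar n), topological (caterpillar n),
      leaves (caterpillar n) = n,
      (forall T : tree, topological T -> leaves T = n ->
         matula T <= matula (caterpillar n))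
    & matula (caterpillar n) = qseq n].
Proof.
move=> Hn; have [B T L M] := cat_props Hn.
split => // T0 HT HL; rewrite M -HL; exact: main_bound.
Qed.
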